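(* Let $p$ be an odd prime and let $q\in\mathbb C_p$ with $|1-q|_p<p^{-1/(p-1)}$. For every $n\in\mathbb Z_+$, $$\sum_{m=0}^n\binom nm(q-1)^mE_{m,q}=\sum_{m=0}^n\sum_{k=m}^n(q-1)^k\binom nk_q s_{1,q}(k,m)E_{m,q}.$$
   Context: For $x\in\mathbb Z_p$, $[x]_q=\frac{1-q^x}{1-q}$. The fermionic $p$-adic integral of a uniformly differentiable $f:\mathbb Z_p\to\mathbb C_p$ is $\int_{\mathbb Z_p}f(x)\,d\mu_{-1}(x)=\lim_{N\to\infty}\sum_{x=0}^{p^N-1}f(x)(-1)^x$. The $q$-Euler numbers are $E_{n,q}=\int_{\mathbb Z_p}[x]_q^n\,d\mu_{-1}(x)$. $[n]_q!=[n]_q\cdots[1]_q$ ($[0]_q!=1$), $\binom nk_q=\frac{[n]_q!}{[k]_q![n-k]_q!}$. The $q$-Stirling numbers of the first kind $s_{1,q}(k,l)$ are defined by $[x]_q[x-1]_q\cdots[x-k+1]_q=q^{-\binom k2}\sum_{l=0}^k s_{1,q}(k,l)[x]_q^l$ for $k\in\mathbb Z_+$, as an identity of polynomials in $[x]_q$ (using $[x-i]_q=q^{-i}([x]_q-[i]_q)$). *)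

(* Defs.v *)
From HB Require Import structures.
From mathcomp Require Import all_boot all_order all_algebra.
From mathcomp Require Import reals.
From Stdlib Require Import ClassicalEpsilon.
Set Implicit Arguments. Unset Strict Implicit. Unset Printing Implicit Defensive.
Import Order.TTheory GRing.Theory Num.Theory.
Local Open Scope ring_scope.

(* We model it as an algebraically closed field K
   equipped with an absolute value absv : K -> R (R the reals) which is
   non-archimedean, normalised by |p| = 1/p, and complete. *)
Definition Cp_like (p : nat) (R : realType) (K : closedFieldType)
  (absv : K -> R) : Prop :=
  (forall x, 0 <= absv x) /\
  [/\ forall x, absv x = 0 <-> x = 0,
      forall x y, absv (x * y) = absv x * absv y,
      forall x y, absv (x + y) <= Num.max (absv x) (absv y),
      absv (p%:R) = (p%:R)^-1 &
      forall u : nat -> K,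
        (forall e : R, 0 < e -> exists N, forall m k, (N <= m)%N -> (N <= k)%N ->
            absv (u m - u k) < e) ->
        exists l, forall e : R, 0 < e -> exists N, forall m, (N <= m)%N ->
            absv (u m - l) < e].

Definition cvg_abs (R : realType) (K : closedFieldType) (absv : K -> R)
  (u : nat -> K) (l : K) : Prop :=
  forall e : R, 0 < e -> exists N, forall m, (N <= m)%N -> absv (u m - l) < e.

(* fermionic p-adic integral: lim_N sum_{x=0}^{p^N-1} f(x) (-1)^x
   (the integrand only enters through its values at natural numbers) *)
Definition fermionic_int (R : realType) (K : closedFieldType) (absv : K -> R)
  (p : nat) (f : nat -> K) : K :=
  epsilon (inhabits 0)
    (cvg_abs absv (fun N => \sum_(x < p ^ N) f x * (-1) ^+ x)).

(* [x]_q = (1 - q^x)/(1 - q) for natural x, written as the geometric sum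
   1 + q + ... + q^(x-1) (equal for q <> 1, and = x at q = 1) *)
Definition qnum (K : closedFieldType) (q : K) (x : nat) : K :=
  \sum_(i < x) q ^+ i.

Definition qfact (K : closedFieldType) (q : K) (n : nat) : K :=
  \prod_(i < n) qnum q i.+1.

Definition qbinom (K : closedFieldType) (q : K) (n k : nat) : K :=
  qfact q n / (qfact q k * qfact q (n - k)).

(* q-Stirling numbers of the first kind: [x]_q[x-1]_q...[x-k+1]_q
   = q^{-C(k,2)} sum_l s_{1,q}(k,l) [x]_q^l, with [x-i]_q = q^{-i}([x]_q-[i]_q),
   as polynomials in X = [x]_q *)
Definition s1q (K : closedFieldType) (q : K) (k l : nat) : K :=
  q ^+ 'C(k, 2) * (\prod_(i < k) (q ^- i *: ('X - (qnum q i)%:P))) `_ l.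

Definition Eq (R : realType) (K : closedFieldType) (absv : K -> R)
  (p : nat) (q : K) (m : nat) : K :=
  fermionic_int absv p (fun x => qnum q x ^+ m).

(* Main.v *)
Require Import Defs.
From HB Require Import structures.
From mathcomp Require Import all_boot all_order all_algebra.
From mathcomp Require Import reals.
From mathcomp Require Import ring lra.
Set Implicit Arguments. Unset Strict Implicit.
Import Order.TTheory GRing.Theory Num.Theory.
Local Open Scope ring_scope.

Lemma qnumS (K : closedFieldType) (q : K) j : qnum q j.+1 = qnum q j + q ^+ j.
Proof. by rewrite /qnum big_ord_recr. Qed.

Lemma qnum_mul (K : closedFieldType) (q : K) j : (q - 1) * qnum q j = q ^+ j - 1.
Proof.
elim: j => [|j IH]; first by rewrite /qnum big_ord0 mulr0 expr0 subrr.
by rewrite qnumS mulrDr IH exprS; ring.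
Qed.

Lemma qnumD (K : closedFieldType) (q : K) a b :
  qnum q (a + b) = qnum q a + q ^+ a * qnum q b.
Proof.
elim: b => [|b IH]; first by rewrite addn0 /qnum big_ord0 mulr0 addr0.
by rewrite addnS !qnumS IH mulrDr addrA exprD.
Qed.

Fixpoint G (K : closedFieldType) (q : K) (n k : nat) : K :=
  match n, k with
  | 0, 0 => 1
  | 0, _.+1 => 0
  | n'.+1, 0 => 1
  | n'.+1, k'.+1 => @G K q n' k' + q ^+ k'.+1 * @G K q n' k'.+1
  end.
Arguments G {K} q n k.

Lemma G_gt (K : closedFieldType) (q : K) n k : (n < k)%N -> G q n k = 0.
Proof.
elim: n k => [|n IH].
  by case.
case=> [|k] //= H.
have H1 : (n < k)%N by [].
rewrite (IH k H1) (IH k.+1 (ltnW H1)).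
by rewrite mulr0 addr0.
Qed.

Lemma qfactS (K : closedFieldType) (q : K) n : qfact q n.+1 = qfact q n * qnum q n.+1.
Proof. by rewrite /qfact big_ord_recr. Qed.

Lemma G_fact (K : closedFieldType) (q : K) n k : (k <= n)%N ->
  G q n k * qfact q k * qfact q (n - k) = qfact q n.
Proof.
elim: n k => [|n IH] [|k] //= H.
- by rewrite /qfact big_ord0 !mulr1.
- by rewrite /qfact big_ord0 !mul1r subn0.
- rewrite subSS mulrDl mulrDl.
  have E1 : G q n k * qfact q k.+1 * qfact q (n - k) = qfact q n * qnum q k.+1.
    by rewrite qfactS -(IH k H); ring.
  rewrite E1.
  have [Hkn|Hkn] := ltnP k n; last first.
    have -> : k = n by apply/eqP; rewrite eqn_leq -ltnS H Hkn.
    by rewrite G_gt // mulr0 !mul0r addr0 qfactS.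
  have Hr : (n - k = (n - k.+1).+1)%N by rewrite subnSK.
  have E2 : qfact q (n - k) = qfact q (n - k.+1) * qnum q (n - k.+1).+1.
    by rewrite Hr qfactS.
  have E3 : qnum q n.+1 = qnum q k.+1 + q ^+ k.+1 * qnum q (n - k.+1).+1.
    by rewrite -qnumD addnS subnKC.
  rewrite E2 (qfactS q n) E3 -(IH k.+1 Hkn).
  ring.
Qed.

Definition P (K : closedFieldType) (q : K) (k : nat) : {poly K} :=
  \prod_(i < k) ('X - (qnum q i)%:P).

Lemma PS (K : closedFieldType) (q : K) k : P q k.+1 = P q k * ('X - (qnum q k)%:P).
Proof. by rewrite /P big_ord_recr. Qed.

Lemma step (K : closedFieldType) (q : K) k :
  ((q - 1) *: 'X + 1) * P q k = (q - 1) *: P q k.+1 + q ^+ k *: P q k.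
Proof.
rewrite PS -!mul_polyC.
have -> : (q ^+ k)%:P = (q - 1)%:P * (qnum q k)%:P + 1.
  by rewrite -polyCM qnum_mul -polyC1 -polyCD subrK.
ring.
Qed.

Lemma poly_id (K : closedFieldType) (q : K) n :
  ((q - 1) *: 'X + 1) ^+ n = \sum_(k < n.+1) ((q - 1) ^+ k * G q n k) *: P q k.
Proof.
elim: n => [|n IH].
  by rewrite expr0 big_ord_recl big_ord0 addr0 /= expr0 mul1r scale1r /P big_ord0.
rewrite exprS IH mulr_sumr.
under eq_bigr do rewrite -scalerAr step scalerDr !scalerA.
rewrite big_split /=.
rewrite [in RHS]big_ord_recl /=.
have E : forall i : 'I_n.+1, ((q - 1) ^+ bump 0 i * G q n.+1 (bump 0 i)) *: P q (bump 0 i)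
   = ((q - 1) ^+ i.+1 * G q n i) *: P q i.+1 + ((q - 1) ^+ i.+1 * (q ^+ i.+1 * G q n i.+1)) *: P q i.+1.
  by move=> i; rewrite /bump /= add1n -scalerDl -mulrDr.
rewrite (eq_bigr _ (fun i _ => E i)).
rewrite big_split /= [in RHS]addrCA.
congr (_ + _).
  apply: eq_bigr => i _; rewrite exprS; congr (_ *: _). ring.
have Z : \sum_(i < n.+2) ((q - 1) ^+ i * G q n i * q ^+ i) *: P q i =
    \sum_(i < n.+1) ((q - 1) ^+ i * G q n i * q ^+ i) *: P q i.
  by rewrite big_ord_recr /= G_gt // mulr0 mul0r scale0r addr0.
rewrite -Z big_ord_recl /= !expr0 !mul1r !mulr1.
congr (_ + _); first by case: (n).
apply: eq_bigr => i _; rewrite /bump /= add1n; congr (_ *: _); ring.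
Qed.

Lemma s1qE (K : closedFieldType) (q : K) k m : q != 0 -> s1q q k m = (P q k)`_m.
Proof.
move=> q0; rewrite /s1q scaler_prod coefZ mulrA.
suff -> : q ^+ 'C(k, 2) * \prod_(i < k) q ^- i = 1 by rewrite mul1r.
elim: k => [|k IH]; first by rewrite big_ord0 bin0n expr0 mulr1.
rewrite big_ord_recr /= binS bin1 exprD mulrACA IH mul1r mulrV //.
by rewrite unitfE expf_neq0.
Qed.

Lemma size_P (K : closedFieldType) (q : K) k : (size (P q k) <= k.+1)%N.
Proof.
elim: k => [|k IH]; first by rewrite /P big_ord0 size_poly1.
rewrite PS; apply: leq_trans (size_polyMleq _ _) _.
by rewrite size_XsubC addn2 /=.
Qed.

Lemma qbinomE (K : closedFieldType) (q : K) n k : (k <= n)%N ->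
  (forall j, (0 < j <= n)%N -> qnum q j != 0) -> qbinom q n k = G q n k.
Proof.
move=> kn nz.
have qf : forall j, (j <= n)%N -> qfact q j != 0.
  move=> j jn; rewrite /qfact; apply/prodf_neq0 => i _; apply: nz.
  by rewrite /= (leq_trans _ jn).
by rewrite /qbinom -(G_fact q kn) -(mulrA (G q n k)) mulfK // mulf_neq0 // qf // ?leq_subr.
Qed.

Lemma coef_id (K : closedFieldType) (q : K) n m : (m <= n)%N -> q != 0 ->
  (forall j, (0 < j <= n)%N -> qnum q j != 0) ->
  ('C(n, m))%:R * (q - 1) ^+ m =
  \sum_(m <= k < n.+1) (q - 1) ^+ k * qbinom q n k * s1q q k m.
Proof.
move=> mn q0 nz.
have L : (((q - 1) *: 'X + 1) ^+ n)`_m = ('C(n, m))%:R * (q - 1) ^+ m.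
  rewrite exprD1n coef_sum (bigD1 (Ordinal (mn : (m < n.+1)%N))) //= big1.
    by rewrite addr0 coefMn exprZn coefZ coefXn eqxx mulr1 mulr_natl.
  move=> i /negPf H; rewrite coefMn exprZn coefZ coefXn.
  have -> : (m == i) = false.
    by apply/negbTE; apply: contraFN H => /eqP E; apply/eqP/val_inj.
  by rewrite mulr0 mul0rn.
rewrite -L poly_id coef_sum.
rewrite -(big_mkord xpredT (fun k => (((q - 1) ^+ k * G q n k) *: P q k)`_m)).
rewrite (@big_cat_nat _ _ _ m 0 n.+1) //=; last exact: leqW.
rewrite [X in X + _]big_nat_cond big1 ?add0r; last first.
  move=> k /andP[/andP[_ km] _].
  by rewrite coefZ nth_default ?mulr0 // (leq_trans (size_P q k)).
rewrite big_nat_cond [RHS]big_nat_cond; apply: eq_bigr => k /andP[/andP[_ kn] _].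
by rewrite coefZ s1qE // qbinomE.
Qed.



Lemma a_nonarch (p : nat) (R : realType) (K : closedFieldType) (a : K -> R)
  (Hc : Cp_like p a) x y B : a x <= B -> a y <= B -> a (x + y) <= B.
Proof.
case: Hc => H0 [Hz HM HN Hp _] hx hy.
by apply: le_trans (HN x y) _; rewrite ge_max hx hy.
Qed.

Lemma a1 (p : nat) (R : realType) (K : closedFieldType) (a : K -> R)
  (Hc : Cp_like p a) : a 1 = 1.
Proof.
have Hc' := Hc; case: Hc' => H0 [Hz HM HN Hp _].
have h : a 1 * a 1 = a 1 * 1 by rewrite -HM !mulr1.
have nz : a 1 != 0 by apply/eqP => /Hz /eqP; rewrite oner_eq0.
exact: (mulfI nz h).
Qed.

Lemma aN1 (p : nat) (R : realType) (K : closedFieldType) (a : K -> R)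
  (Hc : Cp_like p a) : a (-1) = 1.
Proof.
have Hc' := Hc; case: Hc' => H0 [Hz HM HN Hp _].
have h : a (-1) ^+ 2 == 1 by rewrite expr2 -HM mulrNN mulr1 (a1 Hc).
move: h; rewrite sqrf_eq1 => /orP[/eqP //|/eqP h].
by have := H0 (-1); rewrite h; lra.
Qed.

Lemma aN (p : nat) (R : realType) (K : closedFieldType) (a : K -> R)
  (Hc : Cp_like p a) x : a (- x) = a x.
Proof.
have Hc' := Hc; case: Hc' => H0 [Hz HM HN Hp _].
by rewrite -mulN1r HM (aN1 Hc) mul1r.
Qed.

Lemma aB (p : nat) (R : realType) (K : closedFieldType) (a : K -> R)
  (Hc : Cp_like p a) x y : a (x - y) = a (y - x).
Proof. by rewrite -(aN Hc) opprB. Qed.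

Lemma aX (p : nat) (R : realType) (K : closedFieldType) (a : K -> R)
  (Hc : Cp_like p a) x n : a (x ^+ n) = a x ^+ n.
Proof.
have Hc' := Hc; case: Hc' => H0 [Hz HM HN Hp _].
elim: n => [|n IH]; first by rewrite !expr0 (a1 Hc).
by rewrite !exprS HM IH.
Qed.

Lemma anat (p : nat) (R : realType) (K : closedFieldType) (a : K -> R)
  (Hc : Cp_like p a) n : a (n%:R) <= 1.
Proof.
elim: n => [|n IH]; first by case: Hc => H0 [Hz _ _ _ _]; rewrite (proj2 (Hz 0) erefl); lra.
by rewrite -addn1 natrD; apply: (a_nonarch Hc) => //; rewrite (a1 Hc).
Qed.

Lemma astrict (p : nat) (R : realType) (K : closedFieldType) (a : K -> R)
  (Hc : Cp_like p a) x y : a x < a y -> a (x + y) = a y.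
Proof.
have Hc' := Hc; case: Hc' => H0 [Hz HM HN Hp _] h.
have h1 : a (x + y) <= a y.
  by apply: (a_nonarch Hc) => //; apply: ltW.
have h2 : a y <= Num.max (a (x + y)) (a (- x)).
  by have := HN (x + y) (- x); rewrite addrC addKr.
move: h2; rewrite (aN Hc) le_max => /orP[h2|h2]; first by apply/eqP; rewrite eq_le h1 h2.
by move: (lt_le_trans h h2); rewrite ltxx.
Qed.

Lemma asum_le (p : nat) (R : realType) (K : closedFieldType) (a : K -> R)
  (Hc : Cp_like p a) n (F : 'I_n -> K) B : 0 <= B -> (forall i, a (F i) <= B) ->
  a (\sum_(i < n) F i) <= B.
Proof.
have Hc' := Hc; case: Hc' => H0 [Hz HM HN Hp _] hB hF.
elim: n F hF => [|n IH] F hF; first by rewrite big_ord0 (proj2 (Hz 0) erefl).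
rewrite big_ord_recr /=; apply: (a_nonarch Hc) => //.
exact: (IH (fun i => F (widen_ord (leqnSn n) i))).
Qed.

Lemma asum_lt (p : nat) (R : realType) (K : closedFieldType) (a : K -> R)
  (Hc : Cp_like p a) n (F : 'I_n -> K) B : 0 < B -> (forall i, a (F i) < B) ->
  a (\sum_(i < n) F i) < B.
Proof.
have Hc' := Hc; case: Hc' => H0 [Hz HM HN Hp _] hB hF.
elim: n F hF => [|n IH] F hF; first by rewrite big_ord0 (proj2 (Hz 0) erefl).
rewrite big_ord_recr /=; apply: le_lt_trans (HN _ _) _.
by rewrite gt_max hF (IH (fun i => F (widen_ord (leqnSn n) i))).
Qed.

Lemma ap_lt1 (p : nat) (R : realType) (K : closedFieldType) (a : K -> R)
  (Hc : Cp_like p a) : prime p -> a p%:R < 1.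
Proof.
case: Hc => H0 [Hz HM HN Hp _] pp; rewrite Hp invf_lt1 ?ltr1n ?ltr0n ?prime_gt1 ?prime_gt0 //.
Qed.

Lemma acoprime (p : nat) (R : realType) (K : closedFieldType) (a : K -> R)
  (Hc : Cp_like p a) n : prime p -> coprime p n -> a n%:R = 1.
Proof.
have Hc' := Hc; case: Hc' => H0 [Hz HM HN Hp _] pp cpn.
have [b _ hb] := Bezoutl n (prime_gt0 pp).
move: hb; rewrite (eqP cpn) => /dvdnP[c hc].
have E : (1 : K) = c%:R * p%:R - b%:R * n%:R.
  by rewrite -!natrM -hc natrD addrK.
apply/eqP; rewrite eq_le (anat Hc) /=; rewrite leNgt; apply/negP => hn.
have : a 1 < 1.
  rewrite {1}E; apply: le_lt_trans (HN _ _) _; rewrite gt_max (aN Hc) !HM.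
  apply/andP; split.
    apply: le_lt_trans (ap_lt1 Hc pp).
    by rewrite -[X in _ <= X]mul1r ler_wpM2r ?(anat Hc).
  apply: le_lt_trans hn.
  by rewrite -[X in _ <= X]mul1r ler_wpM2r ?(anat Hc).
by rewrite (a1 Hc) ltxx.
Qed.


Lemma a_le1 (p : nat) (R : realType) (K : closedFieldType) (a : K -> R)
  (Hc : Cp_like p a) (x : K) : a (x - 1) < 1 -> a x <= 1.
Proof.
move=> h; rewrite -(subrK 1 x); apply: (a_nonarch Hc); first exact: ltW.
by rewrite (a1 Hc).
Qed.

Lemma aqnum_le1 (p : nat) (R : realType) (K : closedFieldType) (a : K -> R)
  (Hc : Cp_like p a) (x : K) j : a x <= 1 -> a (qnum x j) <= 1.
Proof.
have Hc' := Hc; case: Hc' => H0 [Hz HM HN Hp _] hx.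
apply: (asum_le Hc) => // i; rewrite (aX Hc); exact: exprn_ile1.
Qed.

Lemma qnum_nz (p : nat) (R : realType) (K : closedFieldType) (a : K -> R)
  (Hc : Cp_like p a) (q : K) : prime p -> a (q - 1) < 1 ->
  a (q - 1) ^+ p.-1 < (p%:R)^-1 -> forall j, (0 < j)%N -> qnum q j != 0.
Proof.
have Hc' := Hc; case: Hc' => H0 [Hz HM HN Hp _] pp hq ht j j0.
have a0 : a 0 = 0 by apply/Hz.
have pinv0 : (0 : R) < (p%:R)^-1 by rewrite invr_gt0 ltr0n prime_gt0.
apply/negP => /eqP hj.
have [q1|q1] := eqVneq q 1.
  move: hj; rewrite q1 /qnum (eq_bigr (fun=> 1)) => [|i _]; last exact: expr1n.
  rewrite sumr_const card_ord => hj.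
  have [m cpm jE] := pfactor_coprime pp j0.
  have : a (j%:R : K) = 0 by apply/Hz; exact: hj.
  rewrite jE natrM HM (acoprime Hc pp cpm) mul1r natrX (aX Hc) Hp => /eqP.
  rewrite expf_eq0 invr_eq0 pnatr_eq0 => /andP[_ /eqP p0]; by move: pp; rewrite p0.
have qj : q ^+ j = 1.
  by apply/eqP; rewrite -subr_eq0 -qnum_mul hj mulr0.
have ex : exists d, (0 < d)%N && (q ^+ d == 1) by exists j; rewrite j0 qj eqxx.
case: (ex_minnP ex) => d /andP[d0 /eqP qd] dmin.
have dn1 : d != 1%N by apply/eqP => E; move: qd; rewrite E expr1 => /eqP; rewrite (negPf q1).
have d1 : (1 < d)%N by rewrite ltn_neqAle eq_sym dn1 d0.
set r := pdiv d.
have pr : prime r := pdiv_prime d1.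
have rd : (r %| d)%N := pdiv_dvd d.
set e := (d %/ r)%N.
have de : d = (e * r)%N by rewrite divnK.
have e0 : (0 < e)%N by rewrite divn_gt0 ?prime_gt0 // dvdn_leq.
have ed : (e < d)%N := ltn_Pdiv (prime_gt1 pr) d0.
set z := q ^+ e.
have z1 : z != 1.
  apply/eqP => E; have := dmin e; rewrite e0 -/z E eqxx /= => /(_ isT).
  by rewrite leqNgt ed.
have zr : z ^+ r = 1 by rewrite -exprM -de.
have s0 : z - 1 != 0 by rewrite subr_eq0.
have hz : qnum z r = 0.
  by apply/eqP; have := qnum_mul z r; rewrite zr subrr => /eqP; rewrite mulf_eq0 (negPf s0).
have qle : a q <= 1 := a_le1 Hc hq.
have asq : a (z - 1) <= a (q - 1).
  rewrite /z -qnum_mul HM -[X in _ <= X]mulr1 ler_wpM2l //.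
  exact: (aqnum_le1 Hc).
have as1 : a (z - 1) < 1 := le_lt_trans asq hq.
have az : a z <= 1 := a_le1 Hc as1.
case: (eqVneq r p) => [rp|rp]; last first.
  have cop : coprime p r by rewrite prime_coprime // dvdn_prime2 // eq_sym.
  have ar := acoprime Hc pp cop.
  have D : qnum z r = \sum_(i < r) (z ^+ i - 1) + r%:R.
    by rewrite sumrB sumr_const card_ord subrK.
  have : a (qnum z r) = 1.
    rewrite D (astrict Hc) ar //; apply: le_lt_trans as1.
    apply: (asum_le Hc) => // i.
    rewrite -qnum_mul HM -[X in _ <= X]mulr1 ler_wpM2l //.
    exact: (aqnum_le1 Hc).
  by rewrite hz a0 => /eqP; rewrite eq_sym oner_eq0.
have [p' pE] : exists p', p = p'.+1 by exists p.-1; rewrite prednK // prime_gt0.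
set s := z - 1.
have zp : (s + 1) ^+ p = 1 by rewrite /s subrK -rp.
rewrite pE in pp Hp ht pinv0.
move: zp; rewrite exprD1n pE big_ord_recl /= expr0 bin0 mulr1n => zp.
have S0 : \sum_(i < p'.+1) s ^+ i.+1 *+ 'C(p'.+1, i.+1) = 0.
  apply: (addrI 1); rewrite addr0 -[in RHS]zp; congr (_ + _).
have Y0 : \sum_(i < p'.+1) s ^+ i *+ 'C(p'.+1, i.+1) = 0.
  have : s * \sum_(i < p'.+1) s ^+ i *+ 'C(p'.+1, i.+1) = 0.
    by rewrite mulr_sumr -[RHS]S0; apply: eq_bigr => i _; rewrite mulrnAr -exprS.
  by move/eqP; rewrite mulf_eq0 (negPf s0) => /eqP.
move: Y0; rewrite big_ord_recl /= expr0 bin1 addrC => Y0.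
have : a (p'.+1%:R : K) = 0.
  rewrite -a0 -Y0 [RHS](astrict Hc) // Hp.
  apply: (asum_lt Hc) => // i.
  rewrite /bump leq0n add1n -mulr_natr HM (aX Hc).
  have ps1 : a s ^+ i.+1 < 1 by rewrite exprn_ilt1.
  have ps0 : 0 <= a s ^+ i.+1 by rewrite exprn_ge0.
  case: (ltnP i.+1 p') => hi.
    have := prime_dvd_bin (k := i.+2) pp => /(_ hi) /dvdnP[c hc].
    rewrite hc natrM HM Hp.
    have c1 := anat Hc c; have c0 := H0 (c%:R).
    have h6 : a s ^+ i.+1 * a c%:R < 1 by move: ps1 ps0 c1 c0; generalize (a s ^+ i.+1) (a c%:R) => X C *; nra.
    by rewrite mulrA -[X in _ < X]mul1r ltr_pM2r.
  have ip : i.+1 = p' by apply/eqP; rewrite eqn_leq hi ltn_ord.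
  rewrite ip binn (a1 Hc) mulr1.
  apply: le_lt_trans ht; rewrite /=.
  by apply: lerXn2r; rewrite ?nnegrE.
by rewrite Hp => /eqP; rewrite (gt_eqF pinv0).
Qed.

Unset Implicit Arguments. Set Strict Implicit.


Theorem mainTheorem2 (R : realType) (K : closedFieldType) (absv : K -> R)
  (p : nat) (q : K) (n : nat) :
  prime p -> odd p -> Cp_like p absv ->
  (* |1 - q|_p < p^{-1/(p-1)}, i.e. |1 - q|_p^(p-1) < 1/p *)
  absv (1 - q) ^+ p.-1 < (p%:R)^-1 ->
  \sum_(m < n.+1) ('C(n, m))%:R * (q - 1) ^+ m * Eq absv p q m =
  \sum_(m < n.+1) \sum_(m <= k < n.+1)
      (q - 1) ^+ k * qbinom q n k * s1q q k m * Eq absv p q m.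
Proof.
move=> pp _ Hc ht.
have Hc' := Hc; case: Hc' => H0 [Hz HM HN Hp _].
have ht' : absv (q - 1) ^+ p.-1 < (p%:R)^-1 by rewrite (aB Hc).
have pl1 := ap_lt1 Hc pp; rewrite Hp in pl1.
have hq : absv (q - 1) < 1.
  rewrite ltNge; apply/negP => h; have := exprn_ege1 p.-1 h; lra.
have q0 : q != 0.
  by apply/eqP => q0; move: hq; rewrite q0 sub0r (aN Hc) (a1 Hc) ltxx.
have nz : forall j, (0 < j <= n)%N -> qnum q j != 0.
  by move=> j /andP[j0 _]; apply: (qnum_nz Hc pp hq ht').
apply: eq_bigr => m _.
by rewrite (coef_id (ltn_ord m : (m <= n)%N)) // mulr_suml.
Qed.
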